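(* Let $\mathbb{F}$ be a field of characteristic zero, let $J\ge 0$ be an integer, and let $r,\ell$ be integers with $r\ge 2$ and $1\le \ell\le r$. Then for every odd integer $k\ge 2J+1$, $$\mathrm{HP}^{k}_{\ell}=\sum_{j=1}^{\ell-1} q^{(k+1)j-1}\,\mathrm{HP}^{k+2}_{r-j+1}+\sum_{j=1}^{\ell} q^{(k+1)(j-1)}\,\mathrm{HP}^{k+2}_{r-j+1}.$$
   Context: For $k\ge1$ let $S_k=\mathbb{F}[x_k,x_{k+1},x_{k+2},\ldots]$, graded by weight: the monomial $x_{i_1}^{\alpha_1}\cdots x_{i_m}^{\alpha_m}$ has weight $\sum_t i_t\alpha_t$. Fix $r\ge2$. For $k\ge1$, let $L_k$ be the ideal of $S_k$ generated by the monomials $x_{2a-1}^2$ ($2a-1\ge k$), $x_{2b-1}x_{2b}^{r-1}$ ($2b-1\ge k$), $x_{2c}^{r-n_1}x_{2c+2}^{n_1}$ ($2c\ge k$, $0\le n_1\le r-1$), and $x_{2c}^{r-n_2-1}x_{2c+1}x_{2c+2}^{n_2}$ ($2c\ge k$, $0\le n_2\le r-2$), where $a,b,c$ range over integers. For $1\le \ell\le r$ define the ideal $L_k^{\ell}$ of $S_k$ as follows: if $k$ is even, $L_k^\ell$ is generated by $x_k^{\ell}$, the monomials $x_k^{\ell-t}x_{k+2}^{r-\ell+t}$ and $x_k^{\ell-t}x_{k+1}x_{k+2}^{r-\ell+t-1}$ for $t=1,\ldots,\ell-1$, and the generators of $L_{k+1}$; if $k$ is odd, $L_k^\ell$ is generated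 by $x_k^2$, $x_kx_{k+1}^{\ell-1}$, and the generators of $L_{k+1}^{\ell}$. These are homogeneous ideals. For a graded algebra $A=\bigoplus_{j\ge0}A_j$ with finite-dimensional components, its Hilbert–Poincaré series is $\sum_{j\ge0}\dim_{\mathbb{F}}(A_j)q^j$. Write $\mathrm{HP}^k_\ell$ for the Hilbert–Poincaré series of $S_k/L_k^\ell$ (a formal power series in $q$). *)

(* Defs.v *)
From Stdlib Require Import ClassicalEpsilon.
From HB Require Import structures.
From mathcomp Require Import all_boot all_order all_algebra.
Set Implicit Arguments. Unset Strict Implicit. Unset Printing Implicit Defensive.
Import GRing.Theory.

(* A monomial is given by its exponent function e : nat -> nat
   (e i = exponent of x_i). *)
Definition xpow (i e : nat) : nat -> nat := fun j => if j == i then e else 0.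
Definition mmul (f g : nat -> nat) : nat -> nat := fun j => f j + g j.

Definition genL (k r : nat) (g : nat -> nat) : Prop :=
  (exists i, odd i /\ k <= i /\ g = xpow i 2) \/
  (exists i, odd i /\ k <= i /\ g = mmul (xpow i 1) (xpow i.+1 (r - 1))) \/
  (exists i n1, ~~ odd i /\ k <= i /\ n1 <= r - 1 /\
                g = mmul (xpow i (r - n1)) (xpow i.+2 n1)) \/
  (exists i n2, ~~ odd i /\ k <= i /\ n2 <= r - 2 /\
                g = mmul (mmul (xpow i (r - n2 - 1)) (xpow i.+1 1)) (xpow i.+2 n2)).

Definition genLeven (k r l : nat) (g : nat -> nat) : Prop :=
  g = xpow k l \/
  (exists t, 1 <= t <= l - 1 /\
     (g = mmul (xpow k (l - t)) (xpow k.+2 (r - l + t)) \/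
      g = mmul (mmul (xpow k (l - t)) (xpow k.+1 1)) (xpow k.+2 (r - l + t - 1)))) \/
  genL k.+1 r g.

Definition genLl (k r l : nat) (g : nat -> nat) : Prop :=
  if odd k then
    g = xpow k 2 \/ g = mmul (xpow k 1) (xpow k.+1 (l - 1)) \/ genLeven k.+1 r l g
  else genLeven k r l g.

(* Exponent vectors on x_0, ..., x_n with exponents <= n; every monomial of
   weight n in S_k (k >= 1) is uniquely such a vector. *)
Definition Mon (n : nat) := {ffun 'I_n.+1 -> 'I_n.+1}.

Definition mweight n (e : Mon n) : nat := \sum_(i < n.+1) i * e i.

Definition inSk (k n : nat) (e : Mon n) : bool :=
  (mweight e == n) && [forall i : 'I_n.+1, (i < k) ==> (e i == 0 :> nat)].

Definition mext n (e : Mon n) : nat -> nat :=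
  fun j => if j < n.+1 then nat_of_ord (e (inord j)) else 0.

Definition asb (P : Prop) : bool := if excluded_middle_informative P then true else false.

Definition inIdeal (gen : (nat -> nat) -> Prop) n (e : Mon n) : bool :=
  asb (exists g m, gen g /\ mext e = mmul g m).

(* basis monomial e of the graded piece (S_k)_n = F^{monomials of weight n} *)
Definition mvec (F : fieldType) n (e : Mon n) : {ffun Mon n -> F^o} :=
  [ffun e' => ((e' == e)%:R)%R].

Definition Spiece (F : fieldType) (k n : nat) : {vspace {ffun Mon n -> F^o}} :=
  (\sum_(e : Mon n | inSk k e) <[mvec F e]>)%VS.

Definition Ipiece (F : fieldType) (gen : (nat -> nat) -> Prop) (k n : nat)
  : {vspace {ffun Mon n -> F^o}} :=
  (\sum_(e : Mon n | inSk k e && inIdeal gen e) <[mvec F e]>)%VS.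

Definition HPcoef (F : fieldType) (gen : (nat -> nat) -> Prop) (k n : nat) : nat :=
  (\dim (Spiece F k n) - \dim (Ipiece F gen k n))%N.

(* HP^k_l as a coefficient sequence: HP F k r l n = dim (S_k / L_k^l)_n *)
Definition HP (F : fieldType) (k r l : nat) : nat -> nat :=
  HPcoef F (genLl k r l) k.

(* multiplication of a formal power series (coefficient sequence) by q^s *)
Definition qshift (s : nat) (f : nat -> nat) : nat -> nat :=
  fun n => if s <= n then f (n - s) else 0.

(* Main.v *)
Require Import Defs.
From Stdlib Require Import FunctionalExtensionality ClassicalEpsilon.
From mathcomp Require Import all_boot all_order all_algebra zify.
Import GRing.Theory.
Lemma scE (F : fieldType) (T : finType) (c : F) (f : {ffun T -> F^o}) x : ((c *: f) x = c * f x)%R.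
Proof. exact: ffunE. Qed.
Lemma mvecE (F : fieldType) n (e e' : Mon n) : @mvec F n e e' = ((e' == e)%:R)%R.
Proof. by rewrite /mvec ffunE. Qed.
Lemma mvec_notin (F : fieldType) n (e : Mon n) (s : seq (Mon n)) :
  e \notin s -> @mvec F n e \notin <<map (@mvec F n) s>>%VS.
Proof.
move=> es; apply/negP => H.
have := coord_span (X := in_tuple (map (@mvec F n) s)) H.
move/(congr1 (fun v : {ffun Mon n -> F^o} => v e)).
rewrite sum_ffunE mvecE eqxx.
rewrite big1.
  by move/eqP; rewrite oner_eq0.
move=> i _; rewrite scE /=.
have ils : i < size s by have /= := ltn_ord i; move=> h; rewrite -(size_map (@mvec F n)).
rewrite (nth_map e) // mvecE.
have : nth e s i != e.
  by apply/negP=> /eqP Hi; move: es; rewrite -Hi mem_nth.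
by rewrite eq_sym => /negbTE ->; rewrite mulr0.
Qed.
Lemma dim_mvec (F : fieldType) n (P : pred (Mon n)) :
  \dim (\sum_(e : Mon n | P e) <[@mvec F n e]>)%VS = #|P|.
Proof.
have -> : (\sum_(e : Mon n | P e) <[@mvec F n e]>)%VS = <<map (@mvec F n) (enum P)>>%VS.
  by rewrite span_def big_map big_enum.
have : free (map (@mvec F n) (enum P)).
  elim: (enum P) (enum_uniq P) => [|e s IH] /=; first by rewrite nil_free.
  by move=> /andP[es us]; rewrite free_cons IH // andbT mvec_notin.
by move/eqP => ->; rewrite size_map -cardE.
Qed.

Definition W N (f : nat -> nat) := \sum_(i < N) i * f i.
Definition mono n k (f : nat -> nat) :=
  (forall i, i < k -> f i = 0) /\ (forall i, n < i -> f i = 0) /\ W n.+1 f = n.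
Definition dvd (g f : nat -> nat) := forall i, g i <= f i.
Definition inI (gen : (nat -> nat) -> Prop) f := exists g, gen g /\ dvd g f.
Definition cnt n (P : (nat -> nat) -> Prop) := #|[pred e : Mon n | asb (P (mext e))]|.
Definition toMon n (f : nat -> nat) : Mon n := [ffun i : 'I_n.+1 => inord (f i)].

Lemma asbP (P : Prop) : reflect P (asb P).
Proof. by rewrite /asb; case: excluded_middle_informative => h; constructor. Qed.

Lemma mextE n (e : Mon n) (i : 'I_n.+1) : mext e i = e i.
Proof. by rewrite /mext ltn_ord inord_val. Qed.

Lemma mext_inj n (e1 e2 : Mon n) : mext e1 = mext e2 -> e1 = e2.
Proof.
move=> h; apply/ffunP => i; apply/val_inj; move: (congr1 (fun h => h (nat_of_ord i)) h); by rewrite /= !mextE.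
Qed.

Lemma mextK n f : (forall i, f i <= n) -> (forall i, n < i -> f i = 0) ->
  mext (toMon n f) = f.
Proof.
move=> h1 h2; apply: functional_extensionality => i; rewrite /mext.
case: ltnP => hi; last by rewrite h2.
by rewrite ffunE (inordK hi) inordK // ltnS h1.
Qed.

Lemma mext_big n (e : Mon n) i : n < i -> mext e i = 0.
Proof. by move=> h; rewrite /mext ifF //; apply/negbTE; rewrite -leqNgt. Qed.

Lemma W_ext N f g : f =1 g -> W N f = W N g.
Proof. by move=> h; apply: eq_bigr => i _; rewrite h. Qed.

Lemma W_add N f g : W N (fun i => f i + g i) = W N f + W N g.
Proof. by rewrite /W -big_split; apply: eq_bigr => i _; rewrite mulnDr. Qed.

Lemma W_xpow N j a : W N (xpow j a) = if j < N then j * a else 0.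
Proof.
elim: N => [|N IH]; first by rewrite /W big_ord0.
rewrite /W big_ord_recr /= -/(W N _) IH /xpow.
case: (N =P j) => [->|hne]; first by rewrite ltnn ltnSn.
rewrite muln0 addn0 ltnS [j <= N]leq_eqVlt.
have -> : (j == N) = false by apply/eqP => e; apply: hne.
by [].
Qed.

Lemma W_support n N f : (forall i, n < i -> f i = 0) -> n < N -> W N f = W n.+1 f.
Proof.
move=> h; elim: N => [|N IH] //.
rewrite ltnS leq_eqVlt => /orP[/eqP -> //|hn].
by rewrite /W big_ord_recr /= -/(W N _) IH // h // muln0 addn0.
Qed.

Lemma W_term N f i : i < N -> i * f i <= W N f.
Proof.
move=> h; rewrite /W (bigD1 (Ordinal h)) //=; exact: leq_addr.
Qed.

Lemma mono_bound n k f : 0 < k -> mono n k f -> forall i, f i <= n.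
Proof.
move=> k0 [h1 [h2 h3]] i.
case: (ltnP n i) => hi; first by rewrite h2.
case: i hi => [|i] hi; first by rewrite h1.
have hi' : i.+1 < n.+1 by []. rewrite -{1}h3; apply: (@leq_trans (i.+1 * f i.+1)); last exact: W_term.
by rewrite mulSn leq_addr.
Qed.

Lemma inSk_mono n k (e : Mon n) : 0 < k -> inSk k e = asb (mono n k (mext e)).
Proof.
move=> k0; apply/idP/asbP.
- move=> /andP[hw /forallP hz]; split; [|split].
  + move=> i ik; case: (ltnP n i) => hi; first by rewrite mext_big.
    have := hz (Ordinal (hi : i < n.+1)); rewrite /= ik /= => /eqP.
    by rewrite -mextE.
  + by move=> i; apply: mext_big.
  + rewrite -[RHS](eqP hw) /W /mweight; apply: eq_bigr => i _; by rewrite mextE.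
- move=> [h1 [h2 h3]]; apply/andP; split.
  + apply/eqP; rewrite -[RHS]h3 /W /mweight; apply: eq_bigr => i _; by rewrite mextE.
  + by apply/forallP => i; apply/implyP => ik; rewrite -mextE h1.
Qed.

Lemma inIdeal_inI gen n (e : Mon n) : inIdeal gen e = asb (inI gen (mext e)).
Proof.
apply/asbP/asbP.
- move=> [g [m [hg he]]]; exists g; split => // i; rewrite he /mmul; exact: leq_addr.
- move=> [g [hg hd]]; exists g, (fun i => mext e i - g i); split => //.
  by apply: functional_extensionality => i; rewrite /mmul subnKC.
Qed.

Lemma HP_cnt F k r l n : 0 < k ->
  HP F k r l n = cnt n (fun f => mono n k f /\ ~ inI (genLl k r l) f).
Proof.
move=> k0; rewrite /HP /HPcoef /Spiece /Ipiece.
rewrite !dim_mvec.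
rewrite -(cardID (fun e => inIdeal (genLl k r l) e) (fun e : Mon n => inSk k e)) addKn.
apply: eq_card => e; rewrite !inE -!topredE /= inSk_mono // inIdeal_inI.
apply/andP/asbP.
- by case=> /asbP h2 /asbP h1.
- by case=> h1 h2; split; apply/asbP.
Qed.

Lemma cnt_ext n (P Q : (nat -> nat) -> Prop) : (forall f, P f <-> Q f) -> cnt n P = cnt n Q.
Proof.
move=> h; apply: eq_card => e; rewrite !inE.
by apply/asbP/asbP => /h.
Qed.

Lemma cnt_split n (P C : (nat -> nat) -> Prop) :
  cnt n P = cnt n (fun f => P f /\ C f) + cnt n (fun f => P f /\ ~ C f).
Proof.
rewrite /cnt -(cardID [pred e : Mon n | asb (C (mext e))] [pred e : Mon n | asb (P (mext e))]).
congr (_ + _); apply: eq_card => e; rewrite !inE.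
- apply/andP/asbP.
  + by case=> /asbP h1 /asbP h2.
  + by case=> h1 h2; split; apply/asbP.
- apply/andP/asbP.
  + by case=> /asbP h1 /asbP h2.
  + by case=> h1 h2; split; apply/asbP.
Qed.

Lemma cnt0 n (P : (nat -> nat) -> Prop) : (forall f, ~ P f) -> cnt n P = 0.
Proof. by move=> h; apply: eq_card0 => e; rewrite inE; case: asbP => // /h. Qed.

Lemma cnt_sum n (P : (nat -> nat) -> Prop) j N : (forall f, P f -> f j < N) ->
  cnt n P = \sum_(b < N) cnt n (fun f => P f /\ f j = b).
Proof.
move=> hN.
have -> : cnt n P = cnt n (fun f => P f /\ f j < N).
  by apply: cnt_ext => f; split => [h|[]//]; split => //; apply: hN.
elim: N {hN} => [|N IH].
  by rewrite big_ord0; apply: cnt0 => f [].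
rewrite big_ord_recr /= -IH (cnt_split _ _ (fun f => f j = N)) addnC.
congr (_ + _); apply: cnt_ext => f.
- by split => [[[h1 h2] h3]|[h1 h2]]; repeat split => //; lia.
- by split => [[[h1 h2] h3]|[h1 h2]]; repeat split => //; lia.
Qed.

Lemma cnt_le n m (P Q : (nat -> nat) -> Prop) phi psi :
  (forall f, P f -> Q (phi f)) -> (forall f, P f -> psi (phi f) = f) ->
  (forall g, Q g -> (forall i, g i <= m) /\ (forall i, m < i -> g i = 0)) ->
  cnt n P <= cnt m Q.
Proof.
move=> hPQ hK hQ.
set A := [pred e : Mon n | asb (P (mext e))].
have inj : {in A &, injective (fun e => toMon m (phi (mext e)))}.
  move=> e1 e2; rewrite !inE => /asbP h1 /asbP h2 he.
  apply: mext_inj; rewrite -(hK _ h1) -(hK _ h2); congr psi.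
  have [b1 s1] := hQ _ (hPQ _ h1); have [b2 s2] := hQ _ (hPQ _ h2).
  by have := congr1 (@mext m) he; rewrite !mextK.
rewrite /cnt -/A -(card_in_imset inj); apply: subset_leq_card.
apply/subsetP => x /imsetP [e he ->]; rewrite inE; apply/asbP.
move: he; rewrite inE => /asbP he.
have [b1 s1] := hQ _ (hPQ _ he).
by rewrite mextK //; apply: hPQ.
Qed.

Lemma dvd1 i a f : dvd (xpow i a) f <-> a <= f i.
Proof.
split; first by move/(_ i); rewrite /xpow eqxx.
by move=> h x; rewrite /xpow; case: eqP => [->|_].
Qed.

Lemma dvd2 i j a b f : i != j ->
  dvd (mmul (xpow i a) (xpow j b)) f <-> a <= f i /\ b <= f j.
Proof.
move=> ij; split.
- move=> H; move: (H i) (H j); rewrite /mmul /xpow !eqxx.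
  rewrite (negbTE ij) eq_sym (negbTE ij); lia.
- move=> [h1 h2] x; rewrite /mmul /xpow.
  case: (x =P i) => [->|_]; first by rewrite (negbTE ij); lia.
  case: (x =P j) => [->|_]; lia.
Qed.

Lemma dvd3 i j h a b c f : i != j -> i != h -> j != h ->
  dvd (mmul (mmul (xpow i a) (xpow j b)) (xpow h c)) f <-> a <= f i /\ b <= f j /\ c <= f h.
Proof.
move=> ij ih jh; split.
- move=> H; move: (H i) (H j) (H h); rewrite /mmul /xpow !eqxx.
  rewrite (negbTE ij) (negbTE ih) (negbTE jh) eq_sym (negbTE ij) eq_sym (negbTE ih) eq_sym (negbTE jh); lia.
- move=> [h1 [h2 h3]] x; rewrite /mmul /xpow.
  case: (x =P i) => [->|_]; first by rewrite (negbTE ij) (negbTE ih); lia.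
  case: (x =P j) => [->|_]; first by rewrite (negbTE jh); lia.
  case: (x =P h) => [->|_]; lia.
Qed.

Lemma dvd1E i a f : dvd (xpow i a) f -> a <= f i.
Proof. by move/dvd1. Qed.
Lemma dvd1I i a f : a <= f i -> dvd (xpow i a) f.
Proof. by move/dvd1. Qed.
Lemma dvd2E i j a b f : dvd (mmul (xpow i a) (xpow j b)) f -> i != j -> a <= f i /\ b <= f j.
Proof. by move=> h ij; apply/(@dvd2 i j a b f ij). Qed.
Lemma dvd2I i j a b f : i != j -> a <= f i -> b <= f j -> dvd (mmul (xpow i a) (xpow j b)) f.
Proof. by move=> ij h1 h2; apply/(@dvd2 i j a b f ij). Qed.
Lemma dvd3E i j h a b c f : dvd (mmul (mmul (xpow i a) (xpow j b)) (xpow h c)) f ->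
  i != j -> i != h -> j != h -> a <= f i /\ b <= f j /\ c <= f h.
Proof. by move=> H ij ih jh; apply/(@dvd3 i j h a b c f ij ih jh). Qed.
Lemma dvd3I i j h a b c f : i != j -> i != h -> j != h ->
  a <= f i -> b <= f j -> c <= f h -> dvd (mmul (mmul (xpow i a) (xpow j b)) (xpow h c)) f.
Proof. by move=> ij ih jh h1 h2 h3; apply/(@dvd3 i j h a b c f ij ih jh). Qed.

Definition restrict k (f : nat -> nat) := fun i => if k.+1 < i then f i else 0.
Definition extf k a b (g : nat -> nat) :=
  fun i => if i == k then a else if i == k.+1 then b else g i.

Lemma genL_supp k r g : genL k r g -> forall i, i < k -> g i = 0.
Proof.
move=> [[i0 [_ [hk ->]]]|[[i0 [_ [hk ->]]]|[[i0 [n1 [_ [hk [_ ->]]]]]|[i0 [n2 [_ [hk [_ ->]]]]]]]] i hi;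
  rewrite /mmul /xpow; repeat case: eqP => [?|?]; lia.
Qed.

Lemma genL_mono k1 k2 r g : k1 <= k2 -> genL k2 r g -> genL k1 r g.
Proof.
move=> hk [[i0 [a [hi b]]]|[[i0 [a [hi b]]]|[[i0 [n1 [a [hi c]]]]|[i0 [n2 [a [hi c]]]]]]].
- by left; exists i0; split => //; split => //; lia.
- by right; left; exists i0; split => //; split => //; lia.
- by right; right; left; exists i0, n1; split => //; split => //; lia.
- by right; right; right; exists i0, n2; split => //; split => //; lia.
Qed.

Lemma dvd_restrict g f k : (forall i, i <= k.+1 -> g i = 0) -> dvd g f -> dvd g (restrict k f).
Proof.
move=> hz hd i; rewrite /restrict; case: ifP => h; first exact: hd.
by rewrite hz //; lia.
Qed.

Lemma restrict_le g f k : dvd g (restrict k f) -> dvd g f.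
Proof.
move=> hd i; apply: leq_trans (hd i) _; rewrite /restrict; case: ifP => //.
Qed.

Lemma odd_skip k i : odd k -> odd i -> k.+2 <= i -> i != k.+2 -> k.+4 <= i.
Proof.
move=> ok oi hi hne; rewrite leqNgt; apply/negP => h.
have : i = k.+2 \/ i = k.+3 by lia.
case=> e; subst; first by rewrite eqxx in hne.
by move: oi; rewrite /= ok.
Qed.

Lemma even_skip k i : odd k -> ~~ odd i -> k.+2 <= i -> i != k.+3 -> k.+4 <= i.
Proof.
move=> ok oi hi hne; rewrite leqNgt; apply/negP => h.
have : i = k.+2 \/ i = k.+3 by lia.
case=> e; subst; last by rewrite eqxx in hne.
by move: oi; rewrite /= ok.
Qed.

Lemma odd2 k : odd k -> odd k.+2.
Proof. by move=> ok; rewrite /= negbK. Qed.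

Lemma toH6 k r l' f g : odd k -> genL k.+4 r g -> dvd g f ->
  inI (genLl k.+2 r l') (restrict k f).
Proof.
move=> ok hg hd; exists g; split.
  by rewrite /genLl odd2 //; do 4 right.
apply: dvd_restrict => // i hi; apply: (genL_supp _ _ _ hg); lia.
Qed.

Lemma toG6 k r l f g : odd k -> genL k.+2 r g -> dvd g f -> inI (genLl k r l) f.
Proof.
move=> ok hg hd; exists g; split => //.
by rewrite /genLl ok; do 4 right.
Qed.

Arguments toH6 {k r l' f g}. Arguments toG6 {k r l f g}.
Arguments dvd1E {i a f}. Arguments dvd1I {i a f}.
Arguments dvd2E {i j a b f}. Arguments dvd2I {i j a b f}.
Arguments dvd3E {i j h a b c f}. Arguments dvd3I {i j h a b c f}.

Lemma divG_to_H k r l f : odd k -> 2 <= r -> 1 <= l <= r -> f k <= 1 -> f k + f k.+1 < l ->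
  inI (genLl k r l) f -> inI (genLl k.+2 r (r - f k.+1)) (restrict k f).
Proof.
move=> ok r2 hl fk1 hfl [g [hg hd]].
have rE : forall i, k.+1 < i -> restrict k f i = f i by move=> i h; rewrite /restrict h.
rewrite /genLl ok in hg.
case: hg hd => [->|[->|hge]] hd.
- by have := dvd1E hd; lia.
- by have := dvd2E hd ltac:(lia); lia.
case: hge hd => [->|[[t [ht [->|->]]]|hgl]] hd.
- by have := dvd1E hd; lia.
- have [h1 h2] := dvd2E hd ltac:(lia).
  exists (xpow k.+3 (r - f k.+1)); split; first by rewrite /genLl odd2 //; right; right; left.
  by apply: dvd1I; rewrite rE //; lia.
- have [h1 [h2 h3]] := dvd3E hd ltac:(lia) ltac:(lia) ltac:(lia).
  exists (mmul (xpow k.+2 1) (xpow k.+3 (r - f k.+1 - 1))); split; first by rewrite /genLl odd2 //; right; left.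
  by apply: dvd2I; rewrite ?rE //; lia.
case: hgl hd => [[i [oi [hi ->]]]|[[i [oi [hi ->]]]|[[i [n1 [ei [hi [hn1 ->]]]]]|[i [n2 [ei [hi [hn2 ->]]]]]]]] hd.
- case: (eqVneq i k.+2) => [?|hne]; [subst i|]; last by apply: (toH6 ok _ hd); left; exists i; do 2 split => //; apply: odd_skip.
  have h1 := dvd1E hd.
  exists (xpow k.+2 2); split; first by rewrite /genLl odd2 //; left.
  by apply: dvd1I; rewrite rE.
- case: (eqVneq i k.+2) => [?|hne]; [subst i|]; last by apply: (toH6 ok _ hd); right; left; exists i; do 2 split => //; apply: odd_skip.
  have [h1 h2] := dvd2E hd ltac:(lia).
  exists (mmul (xpow k.+2 1) (xpow k.+3 (r - f k.+1 - 1))); split; first by rewrite /genLl odd2 //; right; left.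
  by apply: dvd2I; rewrite ?rE //; lia.
- case: (eqVneq i k.+3) => [?|hne]; [subst i|]; last by apply: (toH6 ok _ hd); right; right; left; exists i, n1; do 2 split => //; apply: even_skip.
  have [h1 h2] := dvd2E hd ltac:(lia).
  case: (leqP n1 (f k.+1)) => hn.
    exists (xpow k.+3 (r - f k.+1)); split; first by rewrite /genLl odd2 //; right; right; left.
    by apply: dvd1I; rewrite rE //; lia.
  exists (mmul (xpow k.+3 (r - n1)) (xpow k.+4.+1 n1)); split.
    rewrite /genLl odd2 //; right; right; right; left; exists (n1 - f k.+1); split; first lia.
    by left; congr (mmul (xpow _ _) (xpow _ _)); lia.
  by apply: dvd2I; rewrite ?rE //; lia.
- case: (eqVneq i k.+3) => [?|hne]; [subst i|]; last by apply: (toH6 ok _ hd); right; right; right; exists i, n2; do 2 split => //; apply: even_skip.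
  have [h1 [h2 h3]] := dvd3E hd ltac:(lia) ltac:(lia) ltac:(lia).
  case: (leqP n2.+1 (f k.+1)) => hn.
    exists (xpow k.+3 (r - f k.+1)); split; first by rewrite /genLl odd2 //; right; right; left.
    by apply: dvd1I; rewrite rE //; lia.
  exists (mmul (mmul (xpow k.+3 (r - n2 - 1)) (xpow k.+4 1)) (xpow k.+4.+1 n2)); split.
    rewrite /genLl odd2 //; right; right; right; left; exists (n2.+1 - f k.+1); split; first lia.
    by right; congr (mmul (mmul (xpow _ _) (xpow _ _)) (xpow _ _)); lia.
  by apply: dvd3I; rewrite ?rE //; lia.
Qed.

Lemma divH_to_G k r l f : odd k -> 2 <= r -> 1 <= l <= r -> f k.+1 < l ->
  inI (genLl k.+2 r (r - f k.+1)) (restrict k f) -> inI (genLl k r l) f.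
Proof.
move=> ok r2 hl hb [g [hg hd0]].
have hd := restrict_le _ _ _ hd0; clear hd0.
rewrite /genLl odd2 // in hg.
case: hg hd => [->|[->|hge]] hd.
- by apply: (toG6 ok _ hd); left; exists k.+2; split; [apply: odd2|split].
- have [h1 h2] := dvd2E hd ltac:(lia).
  case: (posnP (f k.+1)) => hb0.
    apply: (toG6 (g := mmul (xpow k.+2 1) (xpow k.+3 (r - 1))) ok).
      by right; left; exists k.+2; split; [apply: odd2|split].
    by apply: dvd2I => //; lia.
  exists (mmul (mmul (xpow k.+1 (l - (l - f k.+1))) (xpow k.+2 1)) (xpow k.+3 (r - l + (l - f k.+1) - 1))).
  split; first by rewrite /genLl ok; right; right; right; left; exists (l - f k.+1); split; [lia|right].
  by apply: dvd3I => //; lia.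
case: hge hd => [->|[[t [ht [->|->]]]|hgl]] hd.
- have h1 := dvd1E hd.
  case: (posnP (f k.+1)) => hb0.
    apply: (toG6 (g := mmul (xpow k.+3 (r - 0)) (xpow k.+4.+1 0)) ok).
      by right; right; left; exists k.+3, 0; split; [rewrite /= negbK ok|split; [|split]] => //; lia.
    by apply: dvd2I => //; lia.
  exists (mmul (xpow k.+1 (l - (l - f k.+1))) (xpow k.+3 (r - l + (l - f k.+1)))).
  split; first by rewrite /genLl ok; right; right; right; left; exists (l - f k.+1); split; [lia|left].
  by apply: dvd2I => //; lia.
- have [h1 h2] := dvd2E hd ltac:(lia).
  apply: (toG6 (g := mmul (xpow k.+3 (r - (r - (r - f k.+1) + t))) (xpow k.+4.+1 (r - (r - f k.+1) + t))) ok).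
    by right; right; left; exists k.+3, (r - (r - f k.+1) + t); split; [rewrite /= negbK ok|split; [|split]] => //; lia.
  by apply: dvd2I => //; lia.
- have [h1 [h2 h3]] := dvd3E hd ltac:(lia) ltac:(lia) ltac:(lia).
  apply: (toG6 (g := mmul (mmul (xpow k.+3 (r - (r - (r - f k.+1) + t - 1) - 1)) (xpow k.+4 1)) (xpow k.+4.+1 (r - (r - f k.+1) + t - 1))) ok).
    by right; right; right; exists k.+3, (r - (r - f k.+1) + t - 1); split; [rewrite /= negbK ok|split; [|split]] => //; lia.
  by apply: dvd3I => //; lia.
- apply: (toG6 ok _ hd); apply: (genL_mono k.+2 k.+4 r g) => //; lia.
Qed.

Arguments W_term {N f i}. Arguments divH_to_G {k r l f}. Arguments divG_to_H {k r l f}.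
Lemma W_split k N f : (forall i, i < k -> f i = 0) -> k.+1 < N ->
  W N f = W N (restrict k f) + (k * f k + k.+1 * f k.+1).
Proof.
move=> hz hN.
rewrite (W_ext N f (fun i => restrict k f i + (xpow k (f k) i + xpow k.+1 (f k.+1) i))).
  rewrite !W_add !W_xpow hN; have -> : k < N by lia. by [].
move=> i; rewrite /restrict /xpow.
case: (ltnP i k) => hik.
  rewrite hz //; have -> : (k.+1 < i) = false by lia.
  have -> : (i == k) = false by lia.
  have -> : (i == k.+1) = false by lia.
  by [].
case: (i =P k) => [->|ik].
  have -> : (k.+1 < k) = false by lia.
  have -> : (k == k.+1) = false by lia.
  by rewrite addn0.
case: (i =P k.+1) => [->|ik1].
  have -> : (k.+1 < k.+1) = false by lia.
  by [].
have -> : k.+1 < i by lia.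
by rewrite !addn0.
Qed.

Lemma extf_split k a b g : (forall i, i <= k.+1 -> g i = 0) ->
  extf k a b g =1 fun i => g i + (xpow k a i + xpow k.+1 b i).
Proof.
move=> hz i; rewrite /extf /xpow.
case: (i =P k) => [->|ik].
  by rewrite hz // (_ : (k == k.+1) = false) //; lia.
case: (i =P k.+1) => [->|ik1]; first by rewrite hz.
by rewrite !addn0.
Qed.

Lemma slice n k r l a b : odd k -> 2 <= r -> 1 <= l <= r -> a <= 1 -> a + b < l ->
  cnt n (fun f => mono n k f /\ ~ inI (genLl k r l) f /\ f k = a /\ f k.+1 = b) =
  if k * a + k.+1 * b <= n then
    cnt (n - (k * a + k.+1 * b))
      (fun g => mono (n - (k * a + k.+1 * b)) k.+2 g /\ ~ inI (genLl k.+2 r (r - b)) g)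
  else 0.
Proof.
move=> ok r2 hl ha hab.
have k0 : 0 < k by case: k ok.
set s := k * a + k.+1 * b.
set N := n + k.+2.
case: ifP => hs; last first.
  apply: cnt0 => f [[h1 [h2 h3]] [_ [fa fb]]].
  have := W_split k N f h1 ltac:(lia).
  rewrite (W_support n N f h2) ?h3 ?fa ?fb; lia.
set m := n - s.
apply/eqP; rewrite eqn_leq; apply/andP; split.
- apply: (cnt_le _ _ _ _ (restrict k) (extf k a b)).
  + move=> f [[h1 [h2 h3]] [hn [fa fb]]].
    have hW := W_split k N f h1 ltac:(lia).
    rewrite (W_support n N f h2) ?h3 ?fa ?fb in hW; last by lia.
    have hsupp : forall i, m < i -> restrict k f i = 0.
      move=> i hi; case: (ltnP i N) => hiN; last first.
        by rewrite /restrict h2; [case: ifP | lia].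
      have := W_term (f := restrict k f) hiN; nia.
    split; last first.
      move=> hI; apply: hn; apply: (divH_to_G ok r2 hl); rewrite fb //; lia.
    split; first by move=> i hi; rewrite /restrict ifF //; lia.
    split; first exact: hsupp.
    rewrite -(W_support m N _ hsupp); lia.
  + move=> f [[h1 [h2 h3]] [hn [fa fb]]].
    apply: functional_extensionality => i; rewrite /extf /restrict.
    case: (i =P k) => [->|ik] //; case: (i =P k.+1) => [->|ik1] //.
    case: ifP => // hi; rewrite h1 //; lia.
  + move=> g [hm _]; split; first exact: (mono_bound _ _ _ _ hm).
    by case: hm => _ [].
- apply: (cnt_le _ _ _ _ (extf k a b) (restrict k)).
  + move=> g [[h1 [h2 h3]] hn].
    have hz : forall i, i <= k.+1 -> g i = 0 by move=> i hi; apply: h1; lia.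
    have hW : W N (extf k a b g) = W N g + (k * a + k.+1 * b).
      rewrite (W_ext _ _ _ (extf_split _ _ _ _ hz)) !W_add !W_xpow.
      have -> : k < N by lia.
      have -> : k.+1 < N by lia.
      by [].
    rewrite (W_support m N g h2) ?h3 in hW; last by lia.
    have hsupp : forall i, n < i -> extf k a b g i = 0.
      move=> i hi; rewrite /extf.
      case: (i =P k) => [e|ik]; first by subst; nia.
      case: (i =P k.+1) => [e|ik1]; first by subst; nia.
      apply: h2; lia.
    have ek : extf k a b g k = a by rewrite /extf eqxx.
    have ek1 : extf k a b g k.+1 = b.
      by rewrite /extf (_ : (k.+1 == k) = false) ?eqxx //; lia.
    have hres : restrict k (extf k a b g) = g.
      apply: functional_extensionality => i; rewrite /restrict /extf.
      case: ifP => hi; last by rewrite h1 //; lia.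
      rewrite (_ : (i == k) = false); last by lia.
      by rewrite (_ : (i == k.+1) = false); last by lia.
    split.
      split.
        move=> i hi; rewrite /extf (_ : (i == k) = false); last by lia.
        rewrite (_ : (i == k.+1) = false); last by lia.
        apply: h1; lia.
      split; first exact: hsupp.
      rewrite -(W_support n N _ hsupp); lia.
    split; last by split.
    move=> hI; apply: hn.
    have := divG_to_H ok r2 hl (f := extf k a b g).
    rewrite ek ek1 hres; apply => //.
  + move=> g [[h1 [h2 h3]] hn].
    apply: functional_extensionality => i; rewrite /restrict /extf.
    case: ifP => hi; last by rewrite h1 //; lia.
    rewrite (_ : (i == k) = false); last by lia.
    by rewrite (_ : (i == k.+1) = false); last by lia.
  + move=> f [hm _]; split; first exact: (mono_bound _ _ _ k0 hm).
    by case: hm => _ [].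
Qed.

Lemma P0_bounds n k r l f : odd k -> 1 <= l ->
  mono n k f /\ ~ inI (genLl k r l) f -> f k <= 1 /\ f k + f k.+1 < l.
Proof.
move=> ok hl [hm hn].
case: (leqP 2 (f k)) => h2.
  by exfalso; apply: hn; exists (xpow k 2); split; [rewrite /genLl ok; left | apply: dvd1I].
case: (leqP l (f k.+1)) => h3.
  by exfalso; apply: hn; exists (xpow k.+1 l); split; [rewrite /genLl ok; right; right; left | apply: dvd1I].
split; first lia.
case: (posnP (f k)) => h4; first lia.
case: (leqP (l - 1) (f k.+1)) => h5; last lia.
exfalso; apply: hn; exists (mmul (xpow k 1) (xpow k.+1 (l - 1))); split.
  by rewrite /genLl ok; right; left.
by apply: dvd2I => //; lia.
Qed.

Theorem lemma2p1 (F : fieldType) (J r l k : nat) :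
  [pchar F]%R =i pred0 ->
  2 <= r -> 1 <= l <= r ->
  odd k -> 2 * J + 1 <= k ->
  forall n : nat,
    HP F k r l n =
      (\sum_(1 <= j < l) qshift ((k + 1) * j - 1) (HP F (k + 2) r (r - j + 1)) n
     + \sum_(1 <= j < l.+1) qshift ((k + 1) * (j - 1)) (HP F (k + 2) r (r - j + 1)) n)%N.
Proof.
move=> _ r2 hl ok _ n.
have k0 : 0 < k by case: k ok.
have -> : k + 2 = k.+2 by rewrite addn2.
rewrite HP_cnt // (cnt_split _ _ (fun f => f k = 0)).
set P0 := fun f => mono n k f /\ ~ inI (genLl k r l) f.
have hb := fun f => @P0_bounds n k r l f ok (proj1 (andP hl)).
rewrite (cnt_sum _ _ k.+1 l); last first.
  by move=> f [hf _]; have := hb f hf; lia.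
rewrite (cnt_ext _ (fun f => P0 f /\ ~ f k = 0) (fun f => P0 f /\ f k = 1)); last first.
  by move=> f; split => [[hf h]|[hf h]]; split => //; have := hb f hf; lia.
rewrite (cnt_sum _ _ k.+1 (l - 1)); last first.
  by move=> f [hf h]; have := hb f hf; lia.
rewrite !big_add1 !big_mkord /= subn1 addnC.
congr (_ + _); apply: eq_bigr => i _.
- rewrite (cnt_ext _ _ (fun f => mono n k f /\ ~ inI (genLl k r l) f /\ f k = 1 /\ f k.+1 = i)); last first.
    by move=> f; rewrite /P0; split => [[[[h1 h2] h3] h4]|[h1 [h2 [h3 h4]]]].
  have hi := ltn_ord i.
  rewrite slice //; try lia.
  rewrite /qshift.
  have -> : (k + 1) * i.+1 - 1 = k * 1 + k.+1 * i by nia.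
  have -> : r - i.+1 + 1 = r - i by lia.
  by case: ifP => // hs; rewrite HP_cnt.
- rewrite (cnt_ext _ _ (fun f => mono n k f /\ ~ inI (genLl k r l) f /\ f k = 0 /\ f k.+1 = i)); last first.
    by move=> f; rewrite /P0; split => [[[[h1 h2] h3] h4]|[h1 [h2 [h3 h4]]]].
  have hi := ltn_ord i.
  rewrite slice //; try lia.
  rewrite /qshift.
  have -> : (k + 1) * (i.+1 - 1) = k * 0 + k.+1 * i by nia.
  have -> : r - i.+1 + 1 = r - i by lia.
  by case: ifP => // hs; rewrite HP_cnt.
Qed.
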